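(* For every $\varkappa>0$, the function $\lambda\mapsto\partial_\lambda p(\lambda,\varkappa)$ has exactly one zero $\lambda_0$ in the open interval $(-2K,0)$, and at this zero $\partial_\lambda^2p(\lambda_0,\varkappa)<0$.
   Context: Fix real $J_1<J_2<J_3$; $\rho=\tfrac12\sqrt{J_3-J_1}$, $k=\sqrt{(J_2-J_1)/(J_3-J_1)}\in(0,1)$, $K=K(k)$ the complete elliptic integral of the first kind. $w_1(\lambda)=\rho/\mathrm{sn}(\lambda,k)$, $w_2(\lambda)=\rho\,\mathrm{dn}(\lambda,k)/\mathrm{sn}(\lambda,k)$, $w_3(\lambda)=\rho\,\mathrm{cn}(\lambda,k)/\mathrm{sn}(\lambda,k)$ (Jacobi elliptic functions of modulus $k$). For real $\lambda\in(-2K,0)$ and $\varkappa>0$, $p(\lambda,\varkappa)=\varkappa w_3(\lambda)-2w_1(\lambda)w_2(\lambda)$. *)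

(* Defs.v *)
From Stdlib Require Import Reals Lra ClassicalEpsilon.
From Coquelicot Require Import Coquelicot.
Open Scope R_scope.

Definition ellF (k phi : R) : R :=
  RInt (fun t => / sqrt (1 - k ^ 2 * sin t ^ 2)) 0 phi.

Definition ellK (k : R) : R := ellF k (PI / 2).

(* Jacobi amplitude: am(x, k) is the phi with F(phi, k) = x
   (F(., k) is an increasing bijection R -> R for 0 <= k < 1). *)
Definition jam (k x : R) : R :=
  epsilon (inhabits 0) (fun phi => ellF k phi = x).

Definition jsn (k x : R) : R := sin (jam k x).
Definition jcn (k x : R) : R := cos (jam k x).
Definition jdn (k x : R) : R := sqrt (1 - k ^ 2 * jsn k x ^ 2).

Definition rho (J1 J3 : R) : R := sqrt (J3 - J1) / 2.
Definition kmod (J1 J2 J3 : R) : R := sqrt ((J2 - J1) / (J3 - J1)).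

Definition w1 (J1 J2 J3 l : R) : R := rho J1 J3 / jsn (kmod J1 J2 J3) l.
Definition w2 (J1 J2 J3 l : R) : R :=
  rho J1 J3 * jdn (kmod J1 J2 J3) l / jsn (kmod J1 J2 J3) l.
Definition w3 (J1 J2 J3 l : R) : R :=
  rho J1 J3 * jcn (kmod J1 J2 J3) l / jsn (kmod J1 J2 J3) l.

Definition pfun (J1 J2 J3 l kappa : R) : R :=
  kappa * w3 J1 J2 J3 l - 2 * w1 J1 J2 J3 l * w2 J1 J2 J3 l.

(* Main.v *)
Require Import Defs.
From Stdlib Require Import Reals.
From Coquelicot Require Import Coquelicot.
From Stdlib Require Import Lra Psatz ClassicalEpsilon Ranalysis5.
Open Scope R_scope.

Definition Af (k t : R) := 1 - k ^ 2 * sin t ^ 2.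
Definition fint (k t : R) := / sqrt (1 - k ^ 2 * sin t ^ 2).

Lemma Af_pos k t : 0 <= k^2 < 1 -> 0 < 1 - k ^ 2 * sin t ^ 2.
Proof. intros H. assert (0 <= sin t ^2) by apply pow2_ge_0.
 assert (sin t ^ 2 <= 1) by (pose proof (sin2 t); pose proof (pow2_ge_0 (cos t)); unfold Rsqr in *; nra). nra. Qed.

Lemma Af_le1 k t : 0 <= k^2 -> 1 - k ^ 2 * sin t ^ 2 <= 1.
Proof. intros H. assert (0 <= sin t ^2) by (apply pow2_ge_0). nra. Qed.

Lemma fint_ge1 k t : 0 <= k^2 < 1 -> 1 <= fint k t.
Proof. intros H. unfold fint. pose proof (Af_pos k t H). pose proof (Af_le1 k t (proj1 H)).
 assert (0 < sqrt (1 - k ^ 2 * sin t ^ 2)) by (apply sqrt_lt_R0; lra).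
 assert (sqrt (1 - k ^ 2 * sin t ^ 2) <= 1) by (apply Rle_trans with (sqrt 1); [apply sqrt_le_1_alt; lra | rewrite sqrt_1; lra]).
 apply Rle_trans with (/1); [rewrite Rinv_1; lra| apply Rinv_le_contravar; lra]. Qed.

Lemma fint_derive k t : 0 <= k^2 < 1 -> ex_derive (fint k) t.
Proof. intros H. pose proof (Af_pos k t H). unfold fint. auto_derive.
 split; [lra|]. split; [|exact I]. apply Rgt_not_eq, sqrt_lt_R0; lra. Qed.

Lemma fint_cont k t : 0 <= k^2 < 1 -> continuous (fint k) t.
Proof. intros H. apply (ex_derive_continuous (fint k)), fint_derive, H. Qed.

Lemma fint_RInt k a b : 0 <= k^2 < 1 -> ex_RInt (fint k) a b.
Proof. intros H. apply (ex_RInt_continuous (V:=R_CompleteNormedModule)). intros; apply fint_cont, H. Qed.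

Lemma ellF_derive k x : 0 <= k^2 < 1 -> is_derive (ellF k) x (fint k x).
Proof. intros H. apply (is_derive_RInt (fint k) (ellF k) 0 x).
 - apply filter_forall. intros b. unfold ellF. apply (RInt_correct (fint k)), fint_RInt, H.
 - apply fint_cont, H. Qed.

Lemma ellF_diff k a b : 0 <= k^2 < 1 -> ellF k b - ellF k a = RInt (fint k) a b.
Proof. intros H. unfold ellF. change (fun t => / sqrt (1 - k ^ 2 * sin t ^ 2)) with (fint k). rewrite <- (RInt_Chasles (fint k) 0 a b) by (apply fint_RInt, H).
 change (plus ?x ?y) with (x + y). ring. Qed.

Lemma ellF_grow k a b : 0 <= k^2 < 1 -> a <= b -> b - a <= ellF k b - ellF k a.
Proof. intros H Hab. rewrite ellF_diff by exact H.
 assert (E : RInt (fun _ => 1) a b = b - a).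
 { rewrite RInt_const. exact (Rmult_1_r _). }
 rewrite <- E. apply RInt_le; auto.
 - apply (ex_RInt_continuous (V:=R_CompleteNormedModule)). intros; apply continuous_const.
 - apply fint_RInt, H.
 - intros; apply fint_ge1, H. Qed.

Lemma ellF_lt k a b : 0 <= k^2 < 1 -> a < b -> ellF k a < ellF k b.
Proof. intros H Hab. pose proof (ellF_grow k a b H (Rlt_le _ _ Hab)). lra. Qed.

Lemma ellF_le_inv k a b : 0 <= k^2 < 1 -> ellF k a <= ellF k b -> a <= b.
Proof. intros H Hab. destruct (Rle_lt_dec a b); auto. pose proof (ellF_lt k b a H r). lra. Qed.

Lemma ellF_inj k a b : 0 <= k^2 < 1 -> ellF k a = ellF k b -> a = b.
Proof. intros H E. apply Rle_antisym; apply (ellF_le_inv k); auto; lra. Qed.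

Lemma ellF_0 k : ellF k 0 = 0.
Proof. unfold ellF. rewrite RInt_point. reflexivity. Qed.

Lemma ellF_contR k : 0 <= k^2 < 1 -> continuity (ellF k).
Proof. intros H x. apply continuity_pt_filterlim.
 apply (ex_derive_continuous (ellF k)). eexists. apply ellF_derive, H. Qed.

Lemma ellF_surj k x : 0 <= k^2 < 1 -> exists phi, ellF k phi = x.
Proof. intros H.
 set (a := - Rabs x - 1). set (b := Rabs x + 1).
 assert (Ha : ellF k a < x).
 { pose proof (ellF_grow k a 0 H). rewrite ellF_0 in H0. unfold a in *.
   pose proof (Rle_abs (-x)). rewrite Rabs_Ropp in H1. pose proof (Rabs_pos x). specialize (H0 ltac:(lra)). lra. }
 assert (Hb : x < ellF k b).
 { pose proof (ellF_grow k 0 b H). rewrite ellF_0 in H0. unfold b in *.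
   pose proof (Rle_abs x). pose proof (Rabs_pos x). specialize (H0 ltac:(lra)). lra. }
 destruct (IVT (fun p => ellF k p - x) a b) as [z [_ Hz]].
 - apply continuity_minus. apply ellF_contR, H. apply continuity_const. intros ? ?; reflexivity.
 - unfold a, b; pose proof (Rabs_pos x); lra.
 - simpl; lra.
 - simpl; lra.
 - exists z. simpl in Hz. lra. Qed.

Lemma ellF_jam k x : 0 <= k^2 < 1 -> ellF k (jam k x) = x.
Proof. intros H. unfold jam. apply (epsilon_spec (inhabits 0) (fun phi => ellF k phi = x)).
 apply ellF_surj, H. Qed.

Lemma jam_ellF k p : 0 <= k^2 < 1 -> jam k (ellF k p) = p.
Proof. intros H. apply (ellF_inj k); auto. apply ellF_jam, H. Qed.

Lemma jam_lt k x y : 0 <= k^2 < 1 -> x < y -> jam k x < jam k y.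
Proof. intros H Hxy. destruct (Rlt_le_dec (jam k x) (jam k y)); auto.
 destruct r. - pose proof (ellF_lt k _ _ H H0). rewrite !ellF_jam in H1 by auto. lra.
 - apply (f_equal (ellF k)) in H0. rewrite !ellF_jam in H0 by auto. lra. Qed.

Lemma jam_le k x y : 0 <= k^2 < 1 -> x <= y -> jam k x <= jam k y.
Proof. intros H [h|h]. left; apply jam_lt; auto. subst; lra. Qed.

Lemma jam_cont k x : 0 <= k^2 < 1 -> continuity_pt (jam k) x.
Proof. intros H.
 apply (continuity_pt_recip_interv (ellF k) (jam k) (jam k x - 1) (jam k x + 1)).
 - lra.
 - intros; apply ellF_lt; auto.
 - intros. unfold comp, id. apply ellF_jam, H.
 - intros. split.
   + rewrite <- (jam_ellF k (jam k x - 1)) by auto. apply jam_le; auto.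
   + rewrite <- (jam_ellF k (jam k x + 1)) by auto. apply jam_le; auto.
 - intros. apply ellF_contR, H.
 - split.
   + rewrite <- (ellF_jam k x) at 2 by auto. apply ellF_lt; auto; lra.
   + rewrite <- (ellF_jam k x) at 1 by auto. apply ellF_lt; auto; lra. Qed.

Lemma jam_derive k x : 0 <= k^2 < 1 -> is_derive (jam k) x (sqrt (1 - k ^ 2 * sin (jam k x) ^ 2)).
Proof. intros H.
 assert (Prf : forall a, jam k (x-1) <= a <= jam k (x+1) -> derivable_pt (ellF k) a).
 { intros a _. exists (fint k a). apply is_derive_Reals, ellF_derive, H. }
 assert (Pi : jam k (x-1) <= jam k x <= jam k (x+1)) by (split; apply jam_le; auto; lra).
 assert (E : derive_pt (ellF k) (jam k x) (Prf (jam k x) Pi) = fint k (jam k x)).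
 { apply derive_pt_eq_0, is_derive_Reals, ellF_derive, H. }
 pose proof (Af_pos k (jam k x) H).
 assert (S : 0 < sqrt (1 - k ^ 2 * sin (jam k x) ^ 2)) by (apply sqrt_lt_R0; lra).
 apply is_derive_Reals.
 replace (sqrt (1 - k ^ 2 * sin (jam k x) ^ 2)) with (1 / derive_pt (ellF k) (jam k x) (Prf (jam k x) Pi)).
 - apply (derivable_pt_lim_recip_interv (ellF k) (jam k) (x-1) (x+1) x Prf).
   + apply jam_cont, H.
   + lra.
   + lra.
   + intros; unfold comp, id; apply ellF_jam, H.
   + rewrite E. unfold fint. apply Rinv_neq_0_compat. lra.
 - rewrite E. unfold fint. field. lra. Qed.

Lemma ellF_RInt k p : ellF k p = RInt (fint k) 0 p.
Proof. reflexivity. Qed.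

Lemma ellF_opp k p : 0 <= k^2 < 1 -> ellF k (- p) = - ellF k p.
Proof. intros H. rewrite !ellF_RInt.
 pose proof (RInt_comp_lin (fint k) (-1) 0 0 p (fint_RInt k _ _ H)) as E.
 replace (-1 * 0 + 0) with 0 in E by ring. replace (-1 * p + 0) with (-p) in E by ring.
 rewrite <- E. rewrite <- (RInt_opp (fint k)) by (apply fint_RInt, H).
 apply RInt_ext. intros x _. change (scal (-1) (fint k (-1 * x + 0))) with ((-1) * (fint k (-1 * x + 0))).
 change (opp (fint k x)) with (- (fint k x)). unfold fint.
 replace (-1 * x + 0) with (- x) by ring. rewrite sin_neg. replace ((- sin x)^2) with (sin x ^2) by ring. match goal with |- ?a = ?b => change (@eq R a b) end; ring. Qed.

Lemma ellF_pi k : 0 <= k^2 < 1 -> ellF k PI = 2 * ellK k.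
Proof. intros H. unfold ellK. rewrite !ellF_RInt.
 rewrite <- (RInt_Chasles (fint k) 0 (PI/2) PI) by (apply fint_RInt, H).
 change (plus ?x ?y) with (x + y).
 pose proof (RInt_comp_lin (fint k) (-1) PI (PI/2) 0 (fint_RInt k _ _ H)) as E.
 replace (-1 * (PI/2) + PI) with (PI/2) in E by field. replace (-1 * 0 + PI) with PI in E by ring.
 rewrite <- E.
 rewrite (RInt_ext (fun y => scal (-1) (fint k (-1*y+PI))) (fun y => opp (fint k y))).
 - rewrite (RInt_opp (V:=R_CompleteNormedModule) (fint k)) by (apply fint_RInt, H). rewrite (opp_RInt_swap (V:=R_CompleteNormedModule) (fint k)) by (apply fint_RInt, H). ring.
 - intros x _. change (scal (-1) (fint k (-1 * x + PI))) with ((-1) * (fint k (-1 * x + PI))).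
   change (opp (fint k x)) with (- (fint k x)). unfold fint.
   replace (-1 * x + PI) with (PI - x) by ring. rewrite sin_PI_x. match goal with |- ?a = ?b => change (@eq R a b) end; ring. Qed.

Lemma jam_0 k : 0 <= k^2 < 1 -> jam k 0 = 0.
Proof. intros H. rewrite <- (ellF_0 k) at 1. apply jam_ellF, H. Qed.

Lemma jam_m2K k : 0 <= k^2 < 1 -> jam k (-2 * ellK k) = - PI.
Proof. intros H. replace (-2 * ellK k) with (- ellF k PI) by (rewrite (ellF_pi k) by auto; ring).
 rewrite <- ellF_opp by auto. apply jam_ellF, H. Qed.

Lemma jam_range k l : 0 <= k^2 < 1 -> -2 * ellK k < l < 0 -> - PI < jam k l < 0.
Proof. intros H [h1 h2]. rewrite <- (jam_m2K k) by auto. rewrite <- (jam_0 k) by auto.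
 split; apply jam_lt; auto. Qed.

Lemma ellF_range k p : 0 <= k^2 < 1 -> - PI < p < 0 -> -2 * ellK k < ellF k p < 0.
Proof. intros H [h1 h2]. replace (-2 * ellK k) with (ellF k (- PI)) by (rewrite (ellF_opp k), (ellF_pi k) by auto; ring).
 rewrite <- (ellF_0 k). split; apply ellF_lt; auto. Qed.

Definition Dn (k p : R) := sqrt (1 - k ^ 2 * sin p ^ 2).
Definition PP (k r kap p : R) := kap * (r * cos p / sin p) - 2 * (r / sin p) * (r * Dn k p / sin p).
Definition PP1 (k r kap p : R) := - kap * r / sin p ^ 2
   + 2 * r ^ 2 * cos p * (k ^ 2 * sin p ^ 2 / Dn k p + 2 * Dn k p) / sin p ^ 3.
Definition Mf (k r p : R) := - r * Dn k p / sin p ^ 2.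
Definition uf (k p : R) := cos p / sin p * (Dn k p + / Dn k p).
Definition Hf (k r kap p : R) := kap - 2 * r * uf k p.
Definition Hf1 (k r p : R) := -2 * r * ( - (Dn k p + / Dn k p) / sin p ^ 2
   + cos p / sin p * ((- k ^ 2 * sin p * cos p / Dn k p) * (1 - / Dn k p ^ 2))).
Definition Gf (k r kap p : R) := 2 * r * cos p * (1 + Dn k p ^ 2) - kap * Dn k p * sin p.

Lemma Dn_pos k p : 0 <= k^2 < 1 -> 0 < Dn k p.
Proof. intros H. apply sqrt_lt_R0, Af_pos, H. Qed.

Lemma Dn_sq k p : 0 <= k^2 < 1 -> Dn k p * Dn k p = 1 - k ^ 2 * sin p ^ 2.
Proof. intros H. apply sqrt_sqrt. left; apply Af_pos, H. Qed.

Lemma Dn_derive k p : 0 <= k^2 < 1 -> is_derive (Dn k) p (- k ^ 2 * sin p * cos p / Dn k p).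
Proof. intros H. pose proof (Af_pos k p H). pose proof (Dn_pos k p H). unfold Dn in *.
 auto_derive. lra.
 replace (1 + - (k * (k * 1) * (sin p * (sin p * 1)))) with (1 - k ^ 2 * sin p ^ 2) by ring. field. lra. Qed.

Lemma PP_derive k r kap p : 0 <= k^2 < 1 -> sin p <> 0 -> is_derive (PP k r kap) p (PP1 k r kap p).
Proof. intros H hs. pose proof (Dn_derive k p H). pose proof (Dn_pos k p H).
 unfold PP. auto_derive.
 - repeat split; auto. exists (- k ^ 2 * sin p * cos p / Dn k p). exact H0.
 - replace (Derive (fun x => Dn k x) p) with (- k ^ 2 * sin p * cos p / Dn k p) by (symmetry; apply is_derive_unique; exact H0).
   unfold PP1. match goal with |- ?a = ?b => change (@eq R a b) end. replace (- kap * r / sin p ^ 2) with (- kap * r * (sin p ^ 2 + cos p ^2) / sin p ^ 2) by (assert (sc : sin p ^ 2 + cos p ^ 2 = 1) by (rewrite <- (sin2_cos2 p); unfold Rsqr; ring); rewrite sc; field; auto). field. split; lra. Qed.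

Lemma PP1_MH k r kap p : 0 <= k^2 < 1 -> sin p <> 0 ->
  Dn k p * PP1 k r kap p = Mf k r p * Hf k r kap p.
Proof. intros H hs. pose proof (Dn_sq k p H). pose proof (Dn_pos k p H).
 unfold PP1, Mf, Hf, uf. set (D := Dn k p) in *.
 assert (hk : k ^ 2 = (1 - D * D) / sin p ^ 2) by (rewrite H0; field; auto).
 rewrite hk. field. split; lra. Qed.

Lemma Hf_derive k r kap p : 0 <= k^2 < 1 -> sin p <> 0 -> is_derive (Hf k r kap) p (Hf1 k r p).
Proof. intros H hs. pose proof (Dn_derive k p H). pose proof (Dn_pos k p H).
 unfold Hf, uf. auto_derive.
 - repeat split; auto; try lra; exists (- k ^ 2 * sin p * cos p / Dn k p); exact H0.
 - replace (Derive (fun x => Dn k x) p) with (- k ^ 2 * sin p * cos p / Dn k p) by (symmetry; apply is_derive_unique; exact H0).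
   unfold Hf1. match goal with |- ?a = ?b => change (@eq R a b) end.
   assert (sc : sin p * sin p + cos p * cos p = 1) by (rewrite <- (sin2_cos2 p); unfold Rsqr; ring).
   replace (1 * - sin p * / sin p + cos p * (- (1 * cos p) * / (sin p * sin p))) with (- / sin p ^ 2).
   + field. split; lra.
   + transitivity (-(sin p*sin p + cos p * cos p) / (sin p * sin p)); [rewrite sc; field; auto | field; auto]. Qed.

Lemma poly_ineq q x : 0 <= q < 1 -> 0 < x <= 1 -> q^2 * (1 - x) * x^2 < (2 - q * x) * (1 - q * x).
Proof. intros [h1 h2] [h3 h4].
 assert (0 <= q * x < 1) by (split; nra).
 assert (q^2 * x^2 <= 1) by nra.
 assert (q^2 * (1 - x) * x^2 <= 1 - x) by nra.
 assert (1 - x <= 1 - q * x) by nra.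
 nra. Qed.

Lemma Hf1_pos k r p : 0 <= k^2 < 1 -> 0 < r -> sin p <> 0 -> 0 < Hf1 k r p.
Proof. intros H hr hs. pose proof (Dn_sq k p H). pose proof (Dn_pos k p H).
 assert (sc : cos p ^ 2 = 1 - sin p ^ 2) by (rewrite <- (sin2_cos2 p); unfold Rsqr; ring).
 assert (hx : 0 < sin p ^ 2 <= 1) by (split; [apply pow2_gt_0; auto| pose proof (pow2_ge_0 (cos p)); lra]).
 pose proof (poly_ineq (k^2) (sin p ^ 2) H hx) as PI_.
 unfold Hf1. set (D := Dn k p) in *. set (s := sin p) in *. set (c := cos p) in *.
 assert (E : - (D + / D) / s ^ 2 + c / s * (- k ^ 2 * s * c / D * (1 - / D ^ 2))
   = (k^4 * c^2 * s^4 - (D*D + 1) * (D*D)) / (D^3 * s^2)).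
 { assert (hk : k ^ 2 = (1 - D * D) / s ^ 2) by (rewrite H0; field; auto).
   replace (k^4) with ((k^2)^2) by ring. rewrite hk. field. split; lra. }
 rewrite E.
 assert (num : k ^ 4 * c ^ 2 * s ^ 4 - (D * D + 1) * (D * D) < 0).
 { rewrite H0. replace (k^4 * c^2 * s^4) with ((k^2)^2 * (1 - s^2) * (s^2)^2) by (rewrite <- sc; ring).
   replace (1 - k ^ 2 * s ^ 2 + 1) with (2 - k^2 * s^2) by ring. lra. }
 assert (den : 0 < D ^ 3 * s ^ 2) by (apply Rmult_lt_0_compat; [apply pow_lt; lra| lra]).
 assert (q : (k ^ 4 * c ^ 2 * s ^ 4 - (D * D + 1) * (D * D)) / (D ^ 3 * s ^ 2) < 0).
 { apply Rdiv_neg_pos; auto. }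
 nra. Qed.

Lemma Hf_Gf k r kap p : 0 <= k^2 < 1 -> sin p <> 0 -> Hf k r kap p = - Gf k r kap p / (Dn k p * sin p).
Proof. intros H hs. pose proof (Dn_sq k p H). pose proof (Dn_pos k p H).
 unfold Hf, uf, Gf. field. split; lra. Qed.

Lemma Gf_cont k r kap : 0 <= k^2 < 1 -> continuity (Gf k r kap).
Proof. intros H x. apply continuity_pt_filterlim. apply (ex_derive_continuous (Gf k r kap)).
 pose proof (Dn_derive k x H). unfold Gf. auto_derive. repeat split; exists (- k ^ 2 * sin x * cos x / Dn k x); exact H0. Qed.

Lemma Hf_zero_exists k r kap : 0 <= k^2 < 1 -> 0 < r -> 0 < kap ->
  exists z, - PI < z < 0 /\ Hf k r kap z = 0.
Proof. intros H hr hk.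
 assert (G0 : Gf k r kap 0 > 0).
 { unfold Gf. rewrite cos_0, sin_0. pose proof (pow2_ge_0 (Dn k 0)). nra. }
 assert (G1 : Gf k r kap (- PI) < 0).
 { unfold Gf. rewrite cos_neg, sin_neg, cos_PI, sin_PI. pose proof (pow2_ge_0 (Dn k (-PI))). nra. }
 destruct (IVT (Gf k r kap) (-PI) 0) as [z [hz1 hz2]].
 - apply Gf_cont, H.
 - pose proof PI_RGT_0; lra.
 - lra.
 - lra.
 - exists z. assert (Gf k r kap z = 0) by lra.
   assert (z <> - PI) by (intro; subst; lra). assert (z <> 0) by (intro; subst; lra).
   assert (hzr : - PI < z < 0) by lra.
   split; auto. pose proof (sin_lt_0_var z (proj1 hzr) (proj2 hzr)).
   rewrite Hf_Gf by (auto; lra). rewrite H0. field. split; [lra|]. pose proof (Dn_pos k z H); lra. Qed.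

Lemma Hf_incr k r kap x y : 0 <= k^2 < 1 -> 0 < r -> - PI < x -> x < y -> y < 0 ->
  Hf k r kap x < Hf k r kap y.
Proof. intros H hr h1 h2 h3.
 apply (incr_function (Hf k r kap) (-PI) 0 (Hf1 k r)); simpl; auto; try lra.
 - intros t t1 t2. apply Hf_derive; auto. pose proof (sin_lt_0_var t t1 t2); lra.
 - intros t t1 t2. apply Hf1_pos; auto. pose proof (sin_lt_0_var t t1 t2); lra. Qed.

Lemma Hf_zero_unique k r kap x y : 0 <= k^2 < 1 -> 0 < r -> - PI < x < 0 -> - PI < y < 0 ->
  Hf k r kap x = 0 -> Hf k r kap y = 0 -> x = y.
Proof. intros H hr hx hy ex ey. destruct (Rtotal_order x y) as [h|[h|h]]; auto.
 - pose proof (Hf_incr k r kap x y H hr (proj1 hx) h (proj2 hy)); lra.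
 - pose proof (Hf_incr k r kap y x H hr (proj1 hy) h (proj2 hx)); lra. Qed.

Lemma N_ex_derive k r p : 0 <= k^2 < 1 -> sin p <> 0 -> ex_derive (fun q => Dn k q * Mf k r q) p.
Proof. intros H hs. pose proof (Dn_derive k p H). unfold Mf. auto_derive.
 repeat split; auto; exists (- k ^ 2 * sin p * cos p / Dn k p); exact H0. Qed.

Lemma Mf_ex_derive k r p : 0 <= k^2 < 1 -> sin p <> 0 -> ex_derive (Mf k r) p.
Proof. intros H hs. pose proof (Dn_derive k p H). unfold Mf. auto_derive.
 repeat split; auto; exists (- k ^ 2 * sin p * cos p / Dn k p); exact H0. Qed.

Lemma Mf_neg k r p : 0 <= k^2 < 1 -> 0 < r -> sin p <> 0 -> Mf k r p < 0.
Proof. intros H hr hs. unfold Mf. pose proof (Dn_pos k p H). pose proof (pow2_gt_0 _ hs).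
 unfold Rdiv. assert (0 < / sin p ^ 2) by (apply Rinv_0_lt_compat; lra).
 assert (0 < r * Dn k p * / sin p ^ 2) by (repeat apply Rmult_lt_0_compat; lra). nra. Qed.

Theorem mainTheorem11 (J1 J2 J3 kappa : R)
  (h12 : J1 < J2) (h23 : J2 < J3) (hkappa : 0 < kappa) :
  let K := ellK (kmod J1 J2 J3) in
  let dp := fun l => Derive (fun m => pfun J1 J2 J3 m kappa) l in
  exists l0 : R,
    (-2 * K < l0 < 0 /\ dp l0 = 0) /\
    (forall l : R, -2 * K < l < 0 -> dp l = 0 -> l = l0) /\
    Derive dp l0 < 0.
Proof.
 intros K dp.
 set (k := kmod J1 J2 J3) in *. set (r := rho J1 J3).
 assert (hk : 0 <= k^2 < 1).
 { unfold k, kmod. rewrite pow2_sqrt.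
   - split. apply Rmult_le_pos; [lra| left; apply Rinv_0_lt_compat; lra].
     apply (Rmult_lt_reg_r (J3 - J1)); [lra|]. unfold Rdiv. rewrite Rmult_assoc, Rinv_l; lra.
   - apply Rmult_le_pos; [lra| left; apply Rinv_0_lt_compat; lra]. }
 assert (hr : 0 < r) by (unfold r, rho; apply Rdiv_lt_0_compat; [apply sqrt_lt_R0; lra| lra]).
 assert (sneg : forall l, -2 * K < l < 0 -> sin (jam k l) <> 0).
 { intros l hl. destruct (jam_range k l hk hl). pose proof (sin_lt_0_var _ H H0). lra. }
 assert (dp_eq : forall l, -2 * K < l < 0 -> dp l = Mf k r (jam k l) * Hf k r kappa (jam k l)).
 { intros l hl. rewrite <- PP1_MH by auto. unfold dp. apply is_derive_unique.
   change (fun m => pfun J1 J2 J3 m kappa) with (fun m => PP k r kappa (jam k m)).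
   apply (is_derive_comp (PP k r kappa) (jam k) l (PP1 k r kappa (jam k l)) (Dn k (jam k l))).
   - apply PP_derive; auto.
   - apply jam_derive, hk. }
 destruct (Hf_zero_exists k r kappa hk hr hkappa) as [z [hz Hz]].
 pose proof (sin_lt_0_var z (proj1 hz) (proj2 hz)) as sz.
 assert (jz : jam k (ellF k z) = z) by (apply jam_ellF, hk).
 assert (l0r : -2 * K < ellF k z < 0) by (apply ellF_range; auto).
 exists (ellF k z). split; [split; auto|split].
 - rewrite dp_eq by auto. rewrite jz, Hz. ring.
 - intros l hl e. rewrite dp_eq in e by auto.
   pose proof (Mf_neg k r (jam k l) hk hr (sneg l hl)).
   assert (Hf k r kappa (jam k l) = 0).
   { apply Rmult_integral in e. destruct e; [lra|auto]. }
   assert (jam k l = z) by (apply (Hf_zero_unique k r kappa); auto; apply jam_range; auto).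
   rewrite <- H1. symmetry. apply ellF_jam, hk.
 - set (N := Mf k r).
   assert (hN := Mf_ex_derive k r z hk ltac:(lra)).
   assert (Hd : is_derive (fun l => mult (N (jam k l)) (Hf k r kappa (jam k l))) (ellF k z)
       (plus (mult (scal (Dn k z) (Derive N z)) (Hf k r kappa (jam k (ellF k z)))) (mult (N (jam k (ellF k z))) (scal (Dn k z) (Hf1 k r z))))).
   { apply (is_derive_mult (fun l => N (jam k l)) (fun l => Hf k r kappa (jam k l))).
     - apply (is_derive_comp N (jam k) (ellF k z) (Derive N z) (Dn k z)). rewrite jz. apply Derive_correct, hN.
       pose proof (jam_derive k (ellF k z) hk) as J. rewrite jz in J. exact J.
     - apply (is_derive_comp (Hf k r kappa) (jam k) (ellF k z) (Hf1 k r z) (Dn k z)). rewrite jz. apply Hf_derive; auto; lra.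
       pose proof (jam_derive k (ellF k z) hk) as J. rewrite jz in J. exact J.
     - intros; apply Rmult_comm. }
   rewrite jz in Hd.
   assert (Hd2 : is_derive dp (ellF k z)
       (plus (mult (scal (Dn k z) (Derive N z)) (Hf k r kappa z)) (mult (N z) (scal (Dn k z) (Hf1 k r z))))).
   { apply (is_derive_ext_loc _ _ _ _ ) with (2 := Hd).
     apply filter_imp with (fun t => -2 * K < t /\ t < 0).
     - intros t ht. rewrite dp_eq by auto. reflexivity.
     - apply (open_and _ _ (open_gt _) (open_lt _)). exact l0r. }
   rewrite (is_derive_unique _ _ _ Hd2). rewrite Hz.
   change (plus ?a ?b) with (a + b). change (mult ?a ?b) with (a * b). change (scal ?a ?b) with (a * b).
   unfold N. pose proof (Dn_pos k z hk). pose proof (Mf_neg k r z hk hr ltac:(lra)).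
   pose proof (Hf1_pos k r z hk hr ltac:(lra)).
   assert (0 < Dn k z * Hf1 k r z) by (apply Rmult_lt_0_compat; lra). nra.
Qed.
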